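(* Let $(L,\vee,\wedge,\to,\gets,f,g,0,1)$ be a complete and weakly atomic HBGC-algebra. Then there exists a GC-frame $\mathcal{F}=(X,\leq,R)$ such that $(L,\vee,\wedge,\to,\gets,f,g,0,1)$ is isomorphic to the complex algebra $\mathbb{HB}_{\rm GC}(\mathcal{F})=(\mathcal{T}_\leq,\cup,\cap,\to,\gets,{}^\blacktriangle,{}^\blacktriangledown,\emptyset,X)$.
   Context: A Heyting–Brouwer algebra $(L,\vee,\wedge,\to,\gets,0,1)$ is a bounded lattice in which for all $a,b$ the relative pseudocomplement $a\to b$ (greatest $x$ with $a\wedge x\leq b$) exists and the co-implication $a\gets b$ (least $x$ with $b\leq a\vee x$) exists. A pair $(f,g)$ of maps $L\to L$ is an (order-preserving) Galois connection if $f(a)\leq b\iff a\leq g(b)$ for all $a,b\in L$. An HBGC-algebra is a Heyting–Brouwer algebra equipped with an order-preserving Galois connection $(f,g)$ on $L$; it is complete if its underlying lattice is complete, and weakly atomic if its underlying lattice is weakly atomic, i.e. whenever $x<y$ there exist $a,b$ with $x\leq a\prec b\leq y$, where $\prec$ is the covering relation. A GC-frame $(X,\leq,R)$ is a set $X$ with a quasiorder $\leq$ and a relation $R\subseteq X\times X$ such that $x\leq x'$, $x\,R\,y$, $y'\leq y$ imply $x'\,R\,y'$. $\mathcal{T}_\leq$ is the set of upward $\leq$-closed subsets of $X$. For $A\subseteq X$: $A^\blacktriangle=\{x\mid x\,R\,y\text{ for some }y\in A\}$, $A^\blacktriangledown=\{x\mid y\,R\,x\text{ implies }y\in A\}$.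 On $\mathcal{T}_\leq$: $A\to B=\{a\in X\mid \forall b\geq a\,(b\in A\Rightarrow b\in B)\}$ and $A\gets B=\{a\in X\mid \exists b\leq a\,(b\notin A\text{ and }b\in B)\}$. Isomorphism is with respect to all operations $\vee,\wedge,\to,\gets,f,g,0,1$ ($f\leftrightarrow{}^\blacktriangle$, $g\leftrightarrow{}^\blacktriangledown$). *)

(* Defs.v *)
Set Implicit Arguments.

Section HBGC.
Variable L : Type.
Variable le : L -> L -> Prop.
Variables (join meet imp coimp : L -> L -> L) (bot top : L) (f g : L -> L).

Definition lt (x y : L) : Prop := le x y /\ x <> y.

Definition is_bounded_lattice : Prop :=
  (forall x, le x x) /\
  (forall x y, le x y -> le y x -> x = y) /\
  (forall x y z, le x y -> le y z -> le x z) /\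
  (forall x y z, le (join x y) z <-> (le x z /\ le y z)) /\
  (forall x y z, le z (meet x y) <-> (le z x /\ le z y)) /\
  (forall x, le bot x) /\
  (forall x, le x top).

Definition is_HB_algebra : Prop :=
  is_bounded_lattice /\
  (forall a b x, le (meet a x) b <-> le x (imp a b)) /\
  (forall a b x, le b (join a x) <-> le (coimp a b) x).

Definition is_galois_connection : Prop :=
  forall a b, le (f a) b <-> le a (g b).

Definition is_HBGC_algebra : Prop := is_HB_algebra /\ is_galois_connection.

(** completeness: every subset has a least upper bound
    (hence also a greatest lower bound). *)
Definition is_lub (S : L -> Prop) (s : L) : Prop :=
  (forall x, S x -> le x s) /\ (forall u, (forall x, S x -> le x u) -> le s u).

Definition is_complete : Prop := forall S : L -> Prop, exists s, is_lub S s.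

Definition covers (a b : L) : Prop :=
  lt a b /\ forall z, le a z -> le z b -> z = a \/ z = b.

Definition is_weakly_atomic : Prop :=
  forall x y, lt x y -> exists a b, le x a /\ covers a b /\ le b y.

End HBGC.

Section Frames.
Variable X : Type.
Variable leX : X -> X -> Prop.
Variable R : X -> X -> Prop.

Definition is_quasiorder : Prop :=
  (forall x, leX x x) /\ (forall x y z, leX x y -> leX y z -> leX x z).

Definition is_GC_frame : Prop :=
  is_quasiorder /\
  (forall x x' y y', leX x x' -> R x y -> leX y' y -> R x' y').

Definition upset (A : X -> Prop) : Prop := forall x y, A x -> leX x y -> A y.

Definition set_eq (A B : X -> Prop) : Prop := forall x, A x <-> B x.

Definition setU (A B : X -> Prop) : X -> Prop := fun x => A x \/ B x.
Definition setI (A B : X -> Prop) : X -> Prop := fun x => A x /\ B x.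
Definition set0 : X -> Prop := fun _ => False.
Definition setT : X -> Prop := fun _ => True.

Definition up_imp (A B : X -> Prop) : X -> Prop :=
  fun a => forall b, leX a b -> A b -> B b.

Definition up_coimp (A B : X -> Prop) : X -> Prop :=
  fun a => exists b, leX b a /\ ~ A b /\ B b.

Definition blacktriangle (A : X -> Prop) : X -> Prop :=
  fun x => exists y, R x y /\ A y.

Definition blacktriangledown (A : X -> Prop) : X -> Prop :=
  fun x => forall y, R y x -> A y.

End Frames.

(** An isomorphism from the algebra L onto the complex algebra
    HB_GC(X, leX, R) = (T_<=, ∪, ∩, →, ←, ▲, ▼, ∅, X):
    a map phi into the up-sets that is bijective onto T_<=
    (sets compared extensionally) and preserves all operations. *)
Definition is_iso_to_complex_algebra
  (L : Type) (join meet imp coimp : L -> L -> L) (bot top : L) (f g : L -> L)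
  (X : Type) (leX R : X -> X -> Prop) (phi : L -> X -> Prop) : Prop :=
  (forall a, upset (X:=X) leX (phi a)) /\
  (forall a b, set_eq (phi a) (phi b) -> a = b) /\
  (forall A, upset (X:=X) leX A -> exists a, set_eq (phi a) A) /\
  (forall a b, set_eq (phi (join a b)) (setU (phi a) (phi b))) /\
  (forall a b, set_eq (phi (meet a b)) (setI (phi a) (phi b))) /\
  (forall a b, set_eq (phi (imp a b)) (up_imp (X:=X) leX (phi a) (phi b))) /\
  (forall a b, set_eq (phi (coimp a b)) (up_coimp (X:=X) leX (phi a) (phi b))) /\
  (forall a, set_eq (phi (f a)) (blacktriangle (X:=X) R (phi a))) /\
  (forall a, set_eq (phi (g a)) (blacktriangledown (X:=X) R (phi a))) /\
  set_eq (phi bot) (@set0 X) /\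
  set_eq (phi top) (@setT X).

(* Main.v *)
Require Import Defs.
From Stdlib Require Import Classical.

Theorem theorem4p4
  (L : Type) (le : L -> L -> Prop)
  (join meet imp coimp : L -> L -> L) (bot top : L) (f g : L -> L)
  (HL : is_HBGC_algebra le join meet imp coimp bot top f g)
  (Hcomplete : is_complete le)
  (Hwa : is_weakly_atomic le) :
  exists (X : Type) (leX R : X -> X -> Prop),
    is_GC_frame leX R /\
    exists phi : L -> X -> Prop,
      is_iso_to_complex_algebra join meet imp coimp bot top f g leX R phi.
Proof.
  destruct HL as [[[Hrefl [Hanti [Htr [Hjoin [Hmeet [Hbot Htop]]]]]] [Himp Hco]] Hgc].
  assert (Hjl : forall x y, le x (join x y)) by (intros x y; apply (Hjoin x y); auto).
  assert (Hjr : forall x y, le y (join x y)) by (intros x y; apply (Hjoin x y); auto).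
  assert (Hml : forall x y, le (meet x y) x) by (intros x y; apply (Hmeet x y (meet x y)); auto).
  assert (Hmr : forall x y, le (meet x y) y) by (intros x y; apply (Hmeet x y (meet x y)); auto).
  assert (Hfm : forall a b, le a b -> le (f a) (f b)).
  { intros a b H. apply Hgc. apply Htr with b; auto. apply Hgc; auto. }
  set (Jp := fun j => forall S s, is_lub le S s -> le j s -> exists x, S x /\ le j x).
  assert (Hjp : forall j x y, Jp j -> le j (join x y) -> le j x \/ le j y).
  { intros j x y Hj H.
    destruct (Hj (fun z => z = x \/ z = y) (join x y)) as [z [[->| ->] Hz]]; auto.
    split. intros z [->| ->]; auto. intros u Hu. apply Hjoin; auto. }
  assert (Hden : forall a, is_lub le (fun j => Jp j /\ le j a) a).
  { intros a. destruct (Hcomplete (fun j => Jp j /\ le j a)) as [s [Hs1 Hs2]].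
    assert (Hsa : le s a) by (apply Hs2; intros x [_ Hx]; auto).
    assert (Heq : s = a).
    { destruct (classic (s = a)) as [E|NE]; auto. exfalso.
      destruct (Hwa s a (conj Hsa NE)) as [c [d [Hsc [[[Hcd Hcnd] Hcov] Hda]]]].
      set (k := coimp c d).
      assert (Hdck : le d (join c k)) by (apply Hco; apply Hrefl).
      assert (Hkd : le k d) by (apply Hco; apply Hjr).
      assert (Hkc : ~ le k c).
      { intro H. apply Hcnd. apply Hanti; auto. apply Htr with (join c k); auto.
        apply Hjoin; auto. }
      apply Hkc.
      assert (Jk : Jp k).
      { intros S s0 Hl Hks0.
        destruct (classic (exists x, S x /\ ~ le (meet k x) c)) as [[x [Sx Hx]]|Hn].
        - exists x; split; auto.
          destruct (Hcov (join c (meet k x))) as [E|E]; auto.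
          + apply Hjoin; split; auto. apply Htr with k; auto.
          + exfalso. apply Hx. rewrite <- E. auto.
          + apply Htr with (meet k x); auto. apply Hco. rewrite E; auto.
        - exfalso. apply Hkc.
          assert (Hs0 : le s0 (imp k c)).
          { destruct Hl as [_ Hl]. apply Hl. intros x Sx. apply Himp.
            apply NNPP. intro H. apply Hn. eauto. }
          apply Htr with (meet k k). apply Hmeet; auto.
          apply Himp. apply Htr with s0; auto. }
      apply Htr with s; auto. apply Hs1. split; auto. apply Htr with d; auto. }
    subst s. split; auto. }
  set (X := {j : L | Jp j}).
  exists X, (fun x y : X => le (proj1_sig y) (proj1_sig x)),
    (fun x y : X => le (proj1_sig x) (f (proj1_sig y))).
  split.
  { split. split. intros [x Hx]; simpl; auto.
    intros [x Hx] [y Hy] [z Hz]; simpl; intros; eauto.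
    intros [x Hx] [x' Hx'] [y Hy] [y' Hy']; simpl; intros H1 H2 H3.
    apply Htr with x; auto. apply Htr with (f y); auto. }
  exists (fun a (x : X) => le (proj1_sig x) a).
  unfold is_iso_to_complex_algebra, upset, set_eq, setU, setI, up_imp, up_coimp,
    blacktriangle, blacktriangledown, set0, setT.
  split; [|split; [|split; [|split; [|split; [|split; [|split; [|split; [|split; [|split]]]]]]]]].
  - intros a [x Hx] [y Hy]; simpl; eauto.
  - intros a b H.
    assert (Hab : forall a b, (forall x : X, le (proj1_sig x) a <-> le (proj1_sig x) b) -> le a b).
    { clear a b H. intros a b H. destruct (Hden a) as [_ Ha]. apply Ha.
      intros x [Jx Hx]. apply (H (exist _ x Jx)); auto. }
    apply Hanti; apply Hab; intro x; specialize (H x); tauto.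
  - intros A HA.
    destruct (Hcomplete (fun j => exists H : Jp j, A (exist _ j H))) as [a [Ha1 Ha2]].
    exists a. intros [j Hj]; simpl. split.
    + intro H. destruct (Hj _ _ (conj Ha1 Ha2) H) as [y [[Hy Ay] Hjy]].
      apply (HA (exist _ y Hy)); auto.
    + intro H. apply Ha1. exists Hj; auto.
  - intros a b [j Hj]; simpl. split.
    + intro H. apply Hjp; auto.
    + intros [H|H]; eauto.
  - intros a b x. apply Hmeet.
  - intros a b [j Hj]; simpl. split.
    + intros H [k Hk]; simpl; intros Hkj Hka.
      apply Htr with (meet a (imp a b)). apply Hmeet; split; eauto.
      apply Himp; auto.
    + intro H. apply Himp. destruct (Hden (meet a j)) as [_ Hd]. apply Hd.
      intros k [Jk Hk]. apply (H (exist _ k Jk)); simpl.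
      apply Htr with (meet a j); auto. apply Htr with (meet a j); auto.
  - intros a b [j Hj]; simpl. split.
    + intro H.
      destruct (Hcomplete (fun k => Jp k /\ le k b /\ ~ le k a)) as [c [Hc1 Hc2]].
      assert (Hbac : le b (join a c)).
      { destruct (Hden b) as [_ Hd]. apply Hd. intros k [Jk Hkb].
        destruct (classic (le k a)). apply Htr with a; auto.
        apply Htr with c; auto. }
      assert (Hcc : le (coimp a b) c) by (apply Hco; auto).
      destruct (Hj _ _ (conj Hc1 Hc2) (Htr _ _ _ H Hcc)) as [k [[Jk [Hkb Hka]] Hjk]].
      exists (exist _ k Jk); simpl; auto.
    + intros [[k Jk] [Hjk [Hka Hkb]]]; simpl in *.
      apply Htr with k; auto.
      assert (le k (join a (coimp a b))).
      { apply Htr with b; auto. apply Hco; auto. }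
      destruct (Hjp k _ _ Jk H); tauto.
  - intros a [j Hj]; simpl. split.
    + intro H.
      destruct (Hcomplete (fun y => exists k, (Jp k /\ le k a) /\ y = f k)) as [u [Hu1 Hu2]].
      assert (Hfa : le (f a) u).
      { apply Hgc. destruct (Hden a) as [_ Hd]. apply Hd. intros k Hk.
        apply Hgc. apply Hu1. eauto. }
      destruct (Hj _ _ (conj Hu1 Hu2) (Htr _ _ _ H Hfa)) as [y [[k [[Jk Hka] ->]] Hjy]].
      exists (exist _ k Jk); simpl; auto.
    + intros [[k Jk] [H1 H2]]; simpl in *. apply Htr with (f k); auto.
  - intros a [j Hj]; simpl. split.
    + intros H [k Jk]; simpl; intro Hk. apply Htr with (f j); auto. apply Hgc; auto.
    + intro H. apply Hgc. destruct (Hden (f j)) as [_ Hd]. apply Hd.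
      intros k [Jk Hk]. apply (H (exist _ k Jk)); auto.
  - intros [j Hj]; simpl. split; [|tauto]. intro H.
    destruct (Hj (fun _ => False) bot) as [x [[] _]]; auto.
    split. tauto. intros; auto.
  - intros [j Hj]; simpl. split; auto.
Qed.
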